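(* Let $q$ be a prime power with $q-1=ds$, where $d\ge 3$ and $s$ are positive integers, let $r_0,r_1$ be positive integers and $a_0,a_1\in\mathbb{F}_q^*$. Let $$f(x)=\frac1d\,(a_0x^{r_0}-a_1x^{r_1})\,(1+x^s+\cdots+x^{(d-1)s})+a_1x^{r_1}.$$ Then $f$ is a permutation polynomial of $\mathbb{F}_q$ if and only if $\gcd(r_0r_1,s)=\gcd(r_1,d)=1$ and $a_0^s=a_1^s$. In this case the inverse of $f$ over $\mathbb{F}_q$ is given by $$f^{-1}(x)=\frac1d\left[\left(\frac{x}{a_0}\right)^{\tilde r_0}-\left(\frac{x}{a_1}\right)^{\tilde r_1}\right]\left[1+\left(\frac{x}{a_1}\right)^s+\cdots+\left(\frac{x}{a_1}\right)^{(d-1)s}\right]+\left(\frac{x}{a_1}\right)^{\tilde r_1+us},$$ where, for $i=0,1$, $\tilde r_i$ is a positive integer inverse of $r_i$ modulo $s$ (i.e. $r_i\tilde r_i\equiv1\pmod s$), $r_1'$ is an inverse of $r_1$ modulo $d$, and $u$ is the integer with $0\le u<d$ and $u\equiv r_1'(1-r_1\tilde r_1)/s\pmod d$.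
   Context: A polynomial $f\in\mathbb{F}_q[x]$ is a permutation polynomial of $\mathbb{F}_q$ if it induces a bijection of $\mathbb{F}_q$. A polynomial $g$ is the inverse of $f$ over $\mathbb{F}_q$ if $g(f(c))=c$ for all $c\in\mathbb{F}_q$. Since $d\mid q-1$, $1/d$ makes sense in $\mathbb{F}_q$. *)

(* Defs.v *)
From HB Require Import structures.
From mathcomp Require Import all_boot all_order all_algebra all_field.
Set Implicit Arguments. Unset Strict Implicit. Unset Printing Implicit Defensive.
Import GRing.Theory.
Local Open Scope ring_scope.

Definition perm_poly (F : finFieldType) (p : {poly F}) : Prop :=
  bijective (fun x : F => p.[x]).

Definition cor43_f (F : finFieldType) (d s r0 r1 : nat) (a0 a1 : F) : {poly F} :=
  (d%:R)^-1 *: ((a0 *: 'X^r0 - a1 *: 'X^r1) * \sum_(i < d) 'X^(i * s))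
  + a1 *: 'X^r1.

Definition cor43_g (F : finFieldType) (d s rt0 rt1 u : nat) (a0 a1 : F) : {poly F} :=
  (d%:R)^-1 *: (((a0^-1 *: 'X) ^+ rt0 - (a1^-1 *: 'X) ^+ rt1)
                 * \sum_(i < d) (a1^-1 *: 'X) ^+ (i * s))
  + (a1^-1 *: 'X) ^+ (rt1 + u * s).

(* Main.v *)
Require Import Defs.
From HB Require Import structures.
From mathcomp Require Import all_boot all_order all_algebra all_field.
From mathcomp Require Import ring zify.
From mathcomp Require cyclic.
Import GRing.Theory.
Local Open Scope ring_scope.

Lemma feval (F : finFieldType) (d s r0 r1 : nat) (a0 a1 x : F) :
  (cor43_f d s r0 r1 a0 a1).[x] =
  (d%:R)^-1 * (a0 * x ^+ r0 - a1 * x ^+ r1) * \sum_(i < d) (x ^+ s) ^+ i + a1 * x ^+ r1.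
Proof.
rewrite /cor43_f hornerD !hornerZ hornerM horner_sum hornerD hornerN !hornerZ !hornerXn mulrA.
congr (_ * _ * _ + _); apply: eq_bigr => i _; by rewrite hornerXn -exprM mulnC.
Qed.

Lemma geval (F : finFieldType) (d s rt0 rt1 u : nat) (a0 a1 y : F) :
  (cor43_g d s rt0 rt1 u a0 a1).[y] =
  (d%:R)^-1 * ((a0^-1 * y) ^+ rt0 - (a1^-1 * y) ^+ rt1) * \sum_(i < d) ((a1^-1 * y) ^+ s) ^+ i
   + (a1^-1 * y) ^+ rt1 * ((a1^-1 * y) ^+ s) ^+ u.
Proof.
rewrite /cor43_g hornerD !hornerZ hornerM horner_sum hornerD hornerN !horner_exp !hornerZ hornerX mulrA.
rewrite -!exprM -exprD mulnC.
congr (_ * _ * _ + _); apply: eq_bigr => i _; by rewrite horner_exp hornerZ hornerX -exprM mulnC.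
Qed.

Lemma unitexp (F : finFieldType) (x : F) : x != 0 -> x ^+ #|F|.-1 = 1.
Proof.
move=> nz; apply: (mulIf nz); rewrite mul1r -exprSr prednK ?expf_card //.
by apply/card_gt0P; exists 0.
Qed.

Lemma geo0 (F : fieldType) (z : F) (d : nat) :
  z ^+ d = 1 -> z != 1 -> \sum_(i < d) z ^+ i = 0.
Proof.
move=> zd z1; have := subrX1 z d; rewrite zd subrr => /esym/eqP.
by rewrite mulf_eq0 subr_eq0 (negbTE z1) /= => /eqP.
Qed.

Lemma geo1 (F : fieldType) (d : nat) : \sum_(i < d) (1 : F) ^+ i = d%:R.
Proof.
by rewrite (eq_bigr (fun _ => 1)) ?sumr_const ?card_ord // => i _; rewrite expr1n.
Qed.

Lemma fcase (F : finFieldType) (d s r0 r1 : nat) (a0 a1 x : F) :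
  (#|F|.-1 = d * s)%N -> (d%:R != 0 :> F) -> (0 < s)%N -> (0 < r0)%N -> (0 < r1)%N ->
  (cor43_f d s r0 r1 a0 a1).[x] = if x ^+ s == 1 then a0 * x ^+ r0 else a1 * x ^+ r1.
Proof.
move=> hn dnz s0 r00 r10; rewrite feval; case: eqP => [->|ne].
  by rewrite geo1 mulrAC mulVf // mul1r subrK.
have [->|xnz] := eqVneq x 0.
  by rewrite !expr0n (negbTE (lt0n_neq0 r00)) (negbTE (lt0n_neq0 r10)) !mulr0 subrr mulr0 mul0r add0r.
rewrite geo0 ?mulr0 ?add0r //; last by apply/eqP.
by rewrite -exprM mulnC -hn unitexp.
Qed.

Lemma gcase (F : finFieldType) (d s rt0 rt1 u : nat) (a0 a1 y : F) :
  (#|F|.-1 = d * s)%N -> (d%:R != 0 :> F) -> (0 < s)%N -> (0 < rt0)%N -> (0 < rt1)%N ->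
  a0 != 0 -> a1 != 0 ->
  (cor43_g d s rt0 rt1 u a0 a1).[y] =
  if (a1^-1 * y) ^+ s == 1 then (a0^-1 * y) ^+ rt0
  else (a1^-1 * y) ^+ rt1 * ((a1^-1 * y) ^+ s) ^+ u.
Proof.
move=> hn dnz s0 r00 r10 a0n a1n; rewrite geval; case: eqP => [->|ne].
  by rewrite geo1 mulrAC mulVf // mul1r expr1n mulr1 subrK.
have [->|ynz] := eqVneq y 0.
  by rewrite !mulr0 !expr0n (negbTE (lt0n_neq0 r00)) (negbTE (lt0n_neq0 r10)) !mul0r subrr mulr0 mul0r add0r.
rewrite geo0 ?mulr0 ?add0r //; last by apply/eqP.
by rewrite -exprM mulnC -hn unitexp // mulf_neq0 ?invr_eq0.
Qed.
Lemma congr_u (d s r1 rt1 r1' u : nat) :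
  (r1 * rt1 = 1 %[mod s])%N -> (r1 * r1' = 1 %[mod d])%N ->
  ((u%:Z = r1'%:Z * (divz (1 - (r1 * rt1)%:Z) s%:Z) %[mod d%:Z])%Z) ->
  (r1 * (rt1 + u * s) = 1 %[mod d * s])%N.
Proof.
move=> h1 h2 hu.
have hs : (s%:Z %| (r1 * rt1)%:Z - 1)%Z.
  by rewrite -eqz_mod_dvd; apply/eqP; rewrite !modz_nat h1.
have hd : (d%:Z %| (r1 * r1')%:Z - 1)%Z.
  by rewrite -eqz_mod_dvd; apply/eqP; rewrite !modz_nat h2.
set t := divz _ _ in hu.
have hu' : (d%:Z %| u%:Z - r1'%:Z * t)%Z by rewrite -eqz_mod_dvd; apply/eqP.
have ht : t * s%:Z = 1 - (r1 * rt1)%:Z by rewrite divzK // -opprB rpredN.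
have : ((r1 * (rt1 + u * s))%N%:Z == 1 %[mod (d * s)%N%:Z])%Z.
  rewrite eqz_mod_dvd.
  case/dvdzP: hu' => a ha; case/dvdzP: hd => b hb.
  apply/dvdzP; exists (r1%:Z * a + b * t).
  apply/eqP; rewrite -subr_eq0; apply/eqP.
  transitivity (((r1 * rt1)%:Z - 1 + t * s%:Z) + r1%:Z * s%:Z * (u%:Z - r1'%:Z * t - a * d%:Z)
     + t * s%:Z * ((r1 * r1')%:Z - 1 - b * d%:Z)).
    rewrite !PoszM !PoszD !PoszM; ring.
  by rewrite ht ha hb !subrr !mulr0 !addr0; ring.
by move/eqP; rewrite !modz_nat => -[].
Qed.

Lemma primw (F : finFieldType) : exists w : F, (#|F|.-1).-primitive_root w.
Proof.
have : has (#|F|.-1).-primitive_root (enum (predC1 (0:F))).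
  apply: cyclic.has_prim_root.
  - rewrite -(cardC1 (0:F)); apply/card_gt0P; exists 1; by rewrite !inE oner_neq0.
  - by apply/allP => x; rewrite mem_enum inE => nz; apply/unity_rootP/unitexp.
  - exact: enum_uniq.
  - by rewrite -cardE cardC1.
by case/hasP => w _ hw; exists w.
Qed.

Lemma expgcd1 (F : fieldType) (z : F) (m n : nat) :
  (0 < n)%N -> z ^+ m = 1 -> z ^+ n = 1 -> z ^+ gcdn m n = 1.
Proof.
move=> n0 hm hn; have [a _ /dvdnP [k hk]] := Bezoutr m n0.
have : z ^+ (gcdn m n + a * m) = 1 by rewrite hk mulnC exprM hn expr1n.
by rewrite exprD mulnC exprM hm expr1n mulr1.
Qed.

Lemma exprmod (F : fieldType) (x : F) (n k : nat) : x ^+ n = 1 -> x ^+ k = x ^+ (k %% n).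
Proof.
by move=> hx; rewrite {1}(divn_eq k n) exprD mulnC exprM hx expr1n mul1r.
Qed.

Lemma exprmod1 (F : fieldType) (x : F) (n k : nat) :
  x ^+ n = 1 -> (k = 1 %[mod n])%N -> x ^+ k = x.
Proof.
by move=> hx hk; rewrite (@exprmod _ x n k hx) hk -(@exprmod _ x n 1 hx) expr1.
Qed.

Lemma dnz_lem (F : finFieldType) (d s : nat) :
  (#|F|.-1 = d * s)%N -> (d%:R != 0 :> F).
Proof.
move=> hn; have [w hw] := primw F; apply: (prim_root_dvd_eq0 hw).
by rewrite hn dvdn_mulr.
Qed.

Lemma inv_ok (F : finFieldType) (d s r0 r1 : nat) (a0 a1 : F) rt0 rt1 r1' u c :
  (#|F|.-1 = d * s)%N -> (0 < s)%N ->
  (0 < r0)%N -> (0 < r1)%N -> a0 != 0 -> a1 != 0 ->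
  gcdn r1 d = 1%N -> a0 ^+ s = a1 ^+ s ->
  (0 < rt0)%N -> (0 < rt1)%N ->
  (r0 * rt0 = 1 %[mod s])%N -> (r1 * rt1 = 1 %[mod s])%N ->
  (r1 * r1' = 1 %[mod d])%N ->
  ((u%:Z = r1'%:Z * (divz (1 - (r1 * rt1)%:Z) s%:Z) %[mod d%:Z])%Z) ->
  (cor43_g d s rt0 rt1 u a0 a1).[(cor43_f d s r0 r1 a0 a1).[c]] = c.
Proof.
move=> hn s0 r00 r10 a0n a1n g1 ha t00 t10 h0 h1 h1' hu.
have dnz := @dnz_lem _ _ _ hn.
have [->|cnz] := eqVneq c 0.
  rewrite fcase // expr0n (gtn_eqF s0) eq_sym oner_eq0 expr0n (gtn_eqF r10) mulr0.
  rewrite gcase // mulr0 expr0n (gtn_eqF s0) eq_sym oner_eq0 expr0n (gtn_eqF t10).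
  by rewrite mul0r.
rewrite fcase //; case: ifP => cs.
  rewrite gcase // (mulKf a0n).
  have -> : (a1^-1 * (a0 * c ^+ r0)) ^+ s == 1.
    rewrite !exprMn -exprM mulnC exprM (eqP cs) expr1n mulr1 exprVn ha.
    by rewrite mulVf ?expf_neq0.
  rewrite -exprM.
  exact: (@exprmod1 _ c _ _ (eqP cs) h0).
rewrite gcase // mulKf //.
have -> : (c ^+ r1) ^+ s == 1 = false.
  rewrite -exprM mulnC exprM.
  apply/negP => /eqP h; move/negP: cs; apply; apply/eqP.
  rewrite -(expr1 (c ^+ s)) -g1; apply: expgcd1 => //.
    by rewrite lt0n; apply/eqP => d0; move: (dnz); rewrite d0 eqxx.
  by rewrite -exprM mulnC -hn unitexp.
rewrite -!exprM -exprD.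
apply: (@exprmod1 _ c #|F|.-1); first exact: unitexp cnz. rewrite hn.
have -> : (r1 * rt1 + r1 * (s * u) = r1 * (rt1 + u * s))%N by rewrite mulnDr (mulnC u).
exact: congr_u h1 h1' hu.
Qed.

Lemma root_inj (F : fieldType) (x y : F) (k s : nat) :
  (0 < s)%N -> y != 0 -> x ^+ k = y ^+ k -> x ^+ s = y ^+ s -> gcdn k s = 1%N -> x = y.
Proof.
move=> s0 ynz hk hs g1.
have : (x / y) ^+ gcdn k s = 1.
  apply: expgcd1 => //; by rewrite expr_div_n ?hk ?hs divff // expf_neq0.
by rewrite g1 expr1 => h; rewrite -(divfK ynz x) h mul1r.
Qed.

Lemma pow_nz (F : fieldType) (x : F) (n : nat) : x ^+ n = 1 -> (0 < n)%N -> x != 0.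
Proof.
by move=> h n0; apply/eqP => x0; move: h; rewrite x0 expr0n (gtn_eqF n0) => /eqP; rewrite eq_sym oner_eq0.
Qed.

Lemma suff_bij (F : finFieldType) (d s r0 r1 : nat) (a0 a1 : F) :
  (#|F|.-1 = d * s)%N -> (0 < s)%N ->
  (0 < r0)%N -> (0 < r1)%N -> a0 != 0 -> a1 != 0 ->
  gcdn (r0 * r1) s = 1%N -> gcdn r1 d = 1%N -> a0 ^+ s = a1 ^+ s ->
  perm_poly (cor43_f d s r0 r1 a0 a1).
Proof.
move=> hn s0 r00 r10 a0n a1n g01 g1 ha.
have dnz := @dnz_lem _ _ _ hn.
have d0 : (0 < d)%N by rewrite lt0n; apply/eqP => d0; move: (dnz); rewrite d0 eqxx.
have : coprime (r0 * r1) s by rewrite /coprime g01.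
rewrite coprimeMl => /andP [/eqP c0 /eqP c1].
apply: injF_bij => x y /=; rewrite !fcase //.
have sd : forall z : F, z != 0 -> (z ^+ s) ^+ d = 1.
  by move=> z zn; rewrite -exprM mulnC -hn unitexp.
have mixed : forall x y : F, x ^+ s = 1 -> y ^+ s != 1 -> a0 * x ^+ r0 = a1 * y ^+ r1 -> False.
  move=> {}x {}y xs ys e.
  have := congr1 (fun t => t ^+ s) e; rewrite /= !exprMn -!exprM mulnC exprM xs expr1n mulr1 ha.
  rewrite (mulnC r1) exprM -{1}(mulr1 (a1 ^+ s)) => /(mulfI (expf_neq0 _ a1n))/esym h.
  have yn : y != 0.
    by apply/eqP => y0; move: h; rewrite y0 expr0n (gtn_eqF s0) expr0n (gtn_eqF r10) => /eqP; rewrite eq_sym oner_eq0.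
  move/negP: ys; apply; apply/eqP.
  by rewrite -(expr1 (y ^+ s)) -g1; apply: expgcd1 => //; apply: sd.
case: ifP => xs; case: ifP => ys.
- move/(mulfI a0n) => e; apply: (@root_inj _ _ _ _ _ s0 _ e _ c0).
    exact: (@pow_nz _ _ _ (eqP ys) s0).
  by rewrite (eqP xs) (eqP ys).
- by move=> e; exfalso; apply: (mixed x y (eqP xs) (negbT ys) e).
- by move=> e; exfalso; apply: (mixed y x (eqP ys) (negbT xs) (esym e)).
move/(mulfI a1n) => e.
have [y0|yn] := eqVneq y 0.
  by move: e; rewrite y0 expr0n (gtn_eqF r10) => /eqP; rewrite expf_eq0 => /andP [_ /eqP].
have xn : x != 0.
  by apply/eqP => x0; move: e; rewrite x0 expr0n (gtn_eqF r10) => /esym/eqP; rewrite expf_eq0 (negbTE yn) andbF.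
apply: (@root_inj _ _ _ _ _ s0 yn e _ c1).
apply: (@root_inj _ _ _ _ _ d0 (expf_neq0 _ yn) _ _ g1); last by rewrite !sd.
by rewrite -!exprM !(mulnC s) !exprM e.
Qed.

Lemma nec (F : finFieldType) (d s r0 r1 : nat) (a0 a1 : F) :
  (#|F|.-1 = d * s)%N -> (3 <= d)%N -> (0 < s)%N ->
  (0 < r0)%N -> (0 < r1)%N -> a0 != 0 -> a1 != 0 ->
  perm_poly (cor43_f d s r0 r1 a0 a1) ->
  [/\ gcdn (r0 * r1) s = 1%N, gcdn r1 d = 1%N & a0 ^+ s = a1 ^+ s].
Proof.
move=> hn d3 s0 r00 r10 a0n a1n hb.
have dnz := @dnz_lem _ _ _ hn.
have d0 : (0 < d)%N by apply: leq_trans d3.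
have fE := fun x => @fcase _ _ _ _ _ a0 a1 x hn dnz s0 r00 r10.
have finj := bij_inj hb.
have [w hw] := primw F.
set n := #|F|.-1 in hn hw.
have hw1 : forall k, (w ^+ k == 1) = (n %| k)%N by move=> k; rewrite (prim_order_dvd hw).
have wn : w != 0 by rewrite (prim_root_eq0 hw) -/n hn muln_eq0 negb_or -!lt0n d0 s0.
have wnk : forall k, (0 < k)%N -> (k < d * s)%N -> w ^+ k != 1.
  by move=> k k0 kn; rewrite hw1 hn gtnNdvd.
have sd : forall z : F, z != 0 -> (z ^+ s) ^+ d = 1.
  by move=> z zn; rewrite -exprM mulnC -hn unitexp.
have wds : w ^+ (d * s) = 1 by rewrite -hn prim_expr_order.
have c0 : gcdn r0 s = 1%N.
  apply/eqP; apply/negPn/negP => g1.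
  have g2 : (2 <= gcdn r0 s)%N.
    by move: g1 (gcdn_gt0 r0 s); rewrite s0 orbT; case: (gcdn r0 s) => [|[|]].
  have [s' hs'] := dvdnP (dvdn_gcdr r0 s).
  have [r' hr'] := dvdnP (dvdn_gcdl r0 s).
  move: g2 hs' hr'; move: (gcdn r0 s) => g g2 hs' hr'.
  have s'0 : (0 < s')%N by move: s0; rewrite hs' muln_gt0 => /andP [].
  have e1 : (d * s' * s = (d * s) * s')%N by nia.
  have e2 : (d * s' * r0 = (d * s) * r')%N by rewrite hr' hs'; nia.
  have := finj (w ^+ (d * s')) 1; rewrite !fE !expr1n eqxx.
  rewrite -!exprM e1 e2 !(exprM w (d * s)) wds !expr1n eqxx.
  move=> /(_ erefl) /eqP; apply/negP; apply: wnk; first by rewrite muln_gt0 d0.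
  nia.
have c1 : gcdn r1 s = 1%N.
  apply/eqP; apply/negPn/negP => g1.
  have g2 : (2 <= gcdn r1 s)%N.
    by move: g1 (gcdn_gt0 r1 s); rewrite s0 orbT; case: (gcdn r1 s) => [|[|]].
  have [s' hs'] := dvdnP (dvdn_gcdr r1 s).
  have [r' hr'] := dvdnP (dvdn_gcdl r1 s).
  move: g2 hs' hr'; move: (gcdn r1 s) => g g2 hs' hr'.
  have s'0 : (0 < s')%N by move: s0; rewrite hs' muln_gt0 => /andP [].
  have wsn : w ^+ s != 1 by apply: wnk => //; nia.
  have e1 : ((1 + d * s') * s = s + (d * s) * s')%N by nia.
  have e2 : ((1 + d * s') * r1 = r1 + (d * s) * r')%N by rewrite hr' hs'; nia.
  have := finj (w ^+ (1 + d * s')) w; rewrite !fE -!exprM e1 e2 !exprD !(exprM w (d * s)) wds !expr1n !mulr1 (negbTE wsn). move=> /(_ erefl).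
  rewrite expr1 -[X in _ = X](mulr1 w) => /(mulfI wn) /eqP.
  apply/negP; apply: wnk; first by rewrite muln_gt0 d0.
  nia.
pose mu := [set z : F | z ^+ d == 1].
pose phi := fun z : F => if z == 1 then a0 ^+ s else a1 ^+ s * z ^+ r1.
have sub : mu \subset phi @: mu.
  apply/subsetP => t; rewrite inE => /eqP td.
  have tn : t ^+ n = 1 by rewrite hn exprM td expr1n.
  have [i ti] := prim_rootP hw tn.
  have : (s %| i)%N.
    rewrite -(dvdn_pmul2r d0) mulnC -hn -hw1 exprM -ti td //.
  case/dvdnP => j hj.
  case: hb => ginv _ ginvK.
  set x := ginv (w ^+ j).
  have fx : (cor43_f d s r0 r1 a0 a1).[x] = w ^+ j := ginvK _.
  have xn : x != 0.
    apply/eqP => x0; move: fx; rewrite x0 fE expr0n (gtn_eqF s0) eq_sym oner_eq0.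
    rewrite expr0n (gtn_eqF r10) mulr0 => /esym /eqP; by rewrite expf_eq0 (negbTE wn) andbF.
  have -> : t = phi (x ^+ s).
    rewrite ti hj exprM -fx fE /phi; case: ifP => xs.
      by rewrite exprMn -exprM mulnC exprM (eqP xs) expr1n mulr1.
    by rewrite exprMn -exprM mulnC exprM.
  by apply: imset_f; rewrite inE sd.
have phiinj : {in mu &, injective phi}.
  apply/imset_injP; rewrite eqn_leq leq_imset_card /=.
  exact: subset_leq_card sub.
have cd : gcdn r1 d = 1%N.
  apply/eqP; apply/negPn/negP => g1.
  have g2 : (2 <= gcdn r1 d)%N.
    by move: g1 (gcdn_gt0 r1 d); rewrite d0 orbT; case: (gcdn r1 d) => [|[|]].
  have [d' hd'] := dvdnP (dvdn_gcdr r1 d).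
  have [r' hr'] := dvdnP (dvdn_gcdl r1 d).
  move: g2 hd' hr'; move: (gcdn r1 d) => g g2 hd' hr'.
  have d'0 : (0 < d')%N by move: d0; rewrite hd' muln_gt0 => /andP [].
  have etad : (w ^+ s) ^+ d = 1 by rewrite -exprM mulnC wds.
  have m1 : w ^+ s \in mu by rewrite inE etad.
  have m2 : (w ^+ s) ^+ (1 + d') \in mu by rewrite inE -exprM mulnC exprM etad expr1n.
  have n1 : w ^+ s != 1 by apply: wnk => //; nia.
  have n2 : (w ^+ s) ^+ (1 + d') != 1 by rewrite -exprM; apply: wnk; nia.
  have e : ((1 + d') * r1 = r1 + d * r')%N by rewrite hr' hd'; nia.
  have := phiinj _ _ m1 m2; rewrite /phi (negbTE n1) (negbTE n2).
  rewrite -[in X in _ = X -> _](exprM (w ^+ s)) e exprD (exprM (w ^+ s) d) etad expr1n mulr1.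
  move=> /(_ erefl) /esym; rewrite exprD expr1 -[X in _ = X](mulr1 (w ^+ s)).
  move=> /(mulfI (expf_neq0 _ wn)) /eqP; rewrite -exprM.
  apply/negP; apply: wnk; nia.
split => //.
- by apply/eqP; rewrite -/(coprime (r0 * r1) s) coprimeMl /coprime c0 c1.
have : a1 ^+ s \in phi @: mu by apply: (subsetP sub); rewrite inE sd.
case/imsetP => z; rewrite inE => /eqP zd; rewrite /phi; case: ifP => // /negbT z1.
rewrite -{1}(mulr1 (a1 ^+ s)) => /(mulfI (expf_neq0 _ a1n)) /esym zr.
move/negP: z1; elim; apply/eqP.
by rewrite -(expr1 z) -cd; apply: expgcd1.
Qed.

Theorem corollary4p3 (F : finFieldType) (d s r0 r1 : nat) (a0 a1 : F) :
  (#|F|.-1 = d * s)%N -> (3 <= d)%N -> (0 < s)%N ->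
  (0 < r0)%N -> (0 < r1)%N -> a0 != 0 -> a1 != 0 ->
  (perm_poly (cor43_f d s r0 r1 a0 a1) <->
     [/\ gcdn (r0 * r1) s = 1%N, gcdn r1 d = 1%N & a0 ^+ s = a1 ^+ s])
  /\
  (perm_poly (cor43_f d s r0 r1 a0 a1) ->
   forall rt0 rt1 r1' u : nat,
     (0 < rt0)%N -> (0 < rt1)%N ->
     (r0 * rt0 = 1 %[mod s])%N -> (r1 * rt1 = 1 %[mod s])%N ->
     (r1 * r1' = 1 %[mod d])%N ->
     (u < d)%N ->
     ((u%:Z = r1'%:Z * (divz (1 - (r1 * rt1)%:Z) s%:Z) %[mod d%:Z])%Z) ->
     forall c : F, (cor43_g d s rt0 rt1 u a0 a1).[(cor43_f d s r0 r1 a0 a1).[c]] = c).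
Proof.
move=> hn d3 s0 r00 r10 a0n a1n; split.
  split; first exact: nec.
  by case=> g01 g1 ha; apply: suff_bij.
move=> hp rt0 rt1 r1' u t00 t10 h0 h1 h1' _ hu c.
have [_ g1 ha] := @nec _ _ _ _ _ _ _ hn d3 s0 r00 r10 a0n a1n hp.
exact: (@inv_ok _ d s r0 r1 a0 a1 rt0 rt1 r1' u c hn s0 r00 r10 a0n a1n g1 ha t00 t10 h0 h1 h1' hu).
Qed.
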